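(* Let $A\in\mathbb{R}^{n\times n}$ have all eigenvalues in the open unit disk and let $B\in\mathbb{R}^{n\times m}$ be known. Let $N\geq n$ and for $i=1,\dots,N$ let $x_{i,1},x_{i,2}\in\mathbb{R}^{n}$, $u_{i,1}\in\mathbb{R}^{m}$ satisfy $x_{i,2}=Ax_{i,1}+Bu_{i,1}$. Put $X_{N,1}:=(x_{1,1},\dots,x_{N,1})^{\top}$, $X_{N,2}:=(x_{1,2},\dots,x_{N,2})^{\top}$ (in $\mathbb{R}^{N\times n}$), $U_{N,1}:=(u_{1,1},\dots,u_{N,1})^{\top}\in\mathbb{R}^{N\times m}$, $Z_{B_{N,1}}:=B^{\top}X_{N,1}^{\top}$, $U_{B_{N,1}}:=U_{N,1}B^{\top}$, and let $Z_{N,2}\in\mathbb{R}^{N\times n}$ be a solution of $X_{N,2}X_{N,1}^{\top}=X_{N,1}Z_{N,2}^{\top}+U_{N,1}Z_{B_{N,1}}$. Let $\hat{A}\in\mathbb{R}^{r\times r}$, $\hat{B}\in\mathbb{R}^{r\times m}$, $\hat{C}\in\mathbb{R}^{n\times r}$, and assume: (a1) $(X_{N,1}^{\dagger}Z_{N,2},X_{N,1}^{\dagger}X_{N,1})$ is a regular matrix pencil; (a2) the spectra of $(X_{N,1}^{\dagger}Z_{N,2},X_{N,1}^{\dagger}X_{N,1})$ and $(I_r,\hat{A})$ are disjoint; (a3) $(X_{N,1}^{\dagger}(X_{N,2}-U_{B_{N,1}}),X_{N,1}^{\dagger}X_{N,1})$ is a regular matrix pencil; (a4) the spectra of $(X_{N,1}^{\dagger}(X_{N,2}-U_{B_{N,1}}),X_{N,1}^{\dagger}X_{N,1})$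 and $(I_r,\hat{A})$ are disjoint; (A2) every eigenvalue $\lambda$ of $\hat{A}$ satisfies $0<|\lambda|<1$; (b2) $\operatorname{rank}X_{N,1}=n$. Let $P,Q\in\mathbb{R}^{r\times r}$ be the solutions of $\hat{A}P\hat{A}^{\top}+\hat{B}\hat{B}^{\top}=P$ and $\hat{A}^{\top}Q\hat{A}+\hat{C}^{\top}\hat{C}=Q$. Let $R,S\in\mathbb{R}^{n\times r}$ satisfy $$X_{N,1}^{\dagger}Z_{N,2}R\hat{A}^{\top}+X_{N,1}^{\dagger}Z_{B_{N,1}}^{\top}\hat{B}^{\top}=X_{N,1}^{\dagger}X_{N,1}R,\qquad X_{N,1}^{\dagger}(X_{N,2}-U_{B_{N,1}})S\hat{A}-X_{N,1}^{\dagger}X_{N,1}\hat{C}=X_{N,1}^{\dagger}X_{N,1}S,$$ and set $S_B:=B^{\top}S$. Define $$\tilde{\nabla}_{\hat{A}}f:=2\big(Q\hat{A}P+(S^{\top}R-S_{B}^{\top}\hat{B}^{\top})(\hat{A}^{\dagger})^{\top}\big),\quad \tilde{\nabla}_{\hat{B}}f:=2(S_{B}^{\top}+Q\hat{B}),\quad \tilde{\nabla}_{\hat{C}}f:=2(\hat{C}P-R).$$ Let $R_*,S_*\in\mathbb{R}^{n\times r}$ be the solutions of $AR_*\hat{A}^{\top}+B\hat{B}^{\top}=R_*$ and $A^{\top}S_*\hat{A}-\hat{C}=S_*$. Then $$\tilde{\nabla}_{\hat{A}}f=\nabla_{\hat{A}}f=2(Q\hat{A}P+S_*^{\top}AR_*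 ),\quad \tilde{\nabla}_{\hat{B}}f=\nabla_{\hat{B}}f=2(S_*^{\top}B+Q\hat{B}),\quad \tilde{\nabla}_{\hat{C}}f=\nabla_{\hat{C}}f=2(\hat{C}P-R_* ).$$
   Context: $M^{\dagger}$ denotes the Moore–Penrose pseudoinverse. A pair $(M,K)$ of square matrices of equal size is a regular matrix pencil if $\det(M-\lambda K)$ is not identically zero in $\lambda$; its spectrum is the set of $\lambda\in\mathbb{C}$ with $\det(M-\lambda K)=0$, together with $\infty$ if $K$ is singular. The spectrum of $(I_r,\hat A)$ is the set of $\lambda\in\mathbb{C}$ with $\det(I_r-\lambda\hat A)=0$ (plus $\infty$ if $\hat A$ is singular). Background: for the system $x_{k+1}=Ax_k+Bu_k$, $y_k=x_k$ with transfer function $H(z)=(zI_n-A)^{-1}B$ and a reduced model with $H_r(z)=\hat{C}(zI_r-\hat{A})^{-1}\hat{B}$, $\hat A$ stable, $\|H-H_r\|_{h^2}^2$ equals a constant plus $f(\hat{A},\hat{B},\hat{C})=\operatorname{tr}(\hat{C}P\hat{C}^{\top})-2\operatorname{tr}(R_*\hat{C}^{\top})$, whose entrywise gradients are known (Van Dooren et al.; Bunse-Gerstner et al.) to be $2(Q\hat{A}P+S_*^{\top}AR_* )$, $2(S_*^{\top}B+Q\hat{B})$, $2(\hat{C}P-R_* )$. In this setting $B$ is known, so $Z_{B_{N,1}}$, $U_{B_{N,1}}$ and $S_B$ are computed directly from $B$. *)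

(* Defs.v *)
(* Real matrices over an arbitrary real closed field R
   (covers the real numbers); complex eigenvalues live in R[i] = complex R. *)
From HB Require Import structures.
From mathcomp Require Import all_boot all_order all_algebra.
From mathcomp Require Import complex.
Set Implicit Arguments. Unset Strict Implicit. Unset Printing Implicit Defensive.
Import Order.TTheory GRing.Theory Num.Theory.
Local Open Scope ring_scope.

Section Defs.
Variable R : rcfType.
Local Notation C := (R[i]).

Definition cmx m n (M : 'M[R]_(m, n)) : 'M[C]_(m, n) := map_mx (real_complex R) M.

(* Moore-Penrose pseudoinverse Md of M: the (unique) matrix satisfying the
   four Penrose conditions (real case: the adjoint is the transpose). *)
Definition is_pinv m n (M : 'M[R]_(m, n)) (Md : 'M[R]_(n, m)) : Prop :=
  [/\ M *m Md *m M = M, Md *m M *m Md = Md,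
      (M *m Md)^T = M *m Md & (Md *m M)^T = Md *m M].

Definition eigenvalue_c n (M : 'M[R]_n) (l : C) : bool :=
  root (char_poly (cmx M)) l.

Definition pencil_poly n (M K : 'M[R]_n) : {poly C} :=
  \det (map_mx polyC (cmx M) - 'X *: map_mx polyC (cmx K)).

Definition regular_pencil n (M K : 'M[R]_n) : bool := pencil_poly M K != 0.

(* spectrum of a pencil as a predicate on C extended by infinity (None) *)
Definition pencil_spectrum n (M K : 'M[R]_n) (z : option C) : bool :=
  match z with
  | Some l => root (pencil_poly M K) l
  | None => \det K == 0
  end.

Definition disjoint_spectra n p (M K : 'M[R]_n) (M' K' : 'M[R]_p) : Prop :=
  forall z : option C, ~ (pencil_spectrum M K z /\ pencil_spectrum M' K' z).
End Defs.

(* Main.v *)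
Require Import Defs.
From HB Require Import structures.
From mathcomp Require Import all_boot all_order all_algebra.
From mathcomp Require Import complex.
Import Order.TTheory GRing.Theory Num.Theory.
Local Open Scope ring_scope.
Lemma stein_aux (F : fieldType) n r (M : 'M[F]_n) (N : 'M[F]_r) (D : 'M[F]_(n, r))
  (s : seq F) : M *m D *m N = D ->
  (\prod_(l <- s) (M - l%:M)) *m D *m N ^+ (size s) = D *m \prod_(l <- s) (1 - l *: N).
Proof.
move=> HD; elim: s => [|l s IH]; first by rewrite !big_nil expr0 !mul1mx mulmx1.
have cQ : forall t : seq F, (\prod_(k <- t) (1 - k *: N)) *m N = N *m \prod_(k <- t) (1 - k *: N).
  move=> t; rewrite mulmxE; apply/esym/commr_prod => k _.
  by rewrite /GRing.comm mulrBl mulrBr mul1r mulr1 -!mulmxE -scalemxAl -scalemxAr.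
rewrite !big_cons /= exprSr -!mulmxE -!mulmxA.
rewrite (mulmxA D) (mulmxA (\prod_(j <- s) (M - j%:M))) (mulmxA _ D) IH.
rewrite -mulmxA cQ !mulmxA; congr (_ *m _).
by rewrite !mulmxBl HD mul_scalar_mx -scalemxAl mulmxBr mulmx1 -scalemxAr.
Qed.

 

Lemma stein0 (F : closedFieldType) n r (M : 'M[F]_n) (N : 'M[F]_r) (D : 'M[F]_(n, r)) :
 (forall l, root (char_poly M) l -> \det (1%:M - l *: N) != 0) -> M *m D *m N = D -> D = 0.
Proof.
case: n M D => [|n'] M D Hl HD; first by rewrite flatmx0.
have [s Hs] := closed_field_poly_normal (char_poly M).
rewrite (monicP (char_poly_monic M)) scale1r in Hs.
have HP : \prod_(l <- s) (M - l%:M) = 0.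
  rewrite -(Cayley_Hamilton M) Hs rmorph_prod; apply: eq_bigr => l _.
  by rewrite rmorphB /= horner_mx_X horner_mx_C.
have := @stein_aux _ _ _ M N D s HD; rewrite HP !mul0mx => /esym H0.
have Hu : \prod_(l <- s) (1 - l *: N) \in unitmx.
  have : all (root (char_poly M)) s by apply/allP => l ls; rewrite Hs root_prod_XsubC.
  elim: s {Hs HP H0} => [|l s IH]; first by rewrite big_nil unitmxE det1 unitr1.
  case/andP => rl rs; rewrite big_cons -mulmxE unitmx_mul IH // andbT unitmxE unitfE; exact: Hl.
by rewrite -(mulmxK Hu D) H0 mul0mx.
Qed.

Lemma det_root (F : fieldType) n (A : 'M[F]_n) a :
  \det (a%:M - A) == 0 -> root (char_poly A) a.
Proof.
case/det0P => v v0 vA; rewrite -eigenvalue_root_char; apply/eigenvalueP.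
exists v => //; apply/eqP; rewrite eq_sym -subr_eq0 -mul_mx_scalar -mulmxBr.
by apply/eqP.
Qed.

Lemma detIZ (R : rcfType) r (Ah : 'M[R]_r) (l : R[i]) :
  (forall l, eigenvalue_c Ah l -> 0 < `|l| < 1) -> `|l| < 1 ->
  \det (1%:M - l *: cmx Ah) != 0.
Proof.
move=> HA Hl.
have [->|l0] := eqVneq l 0; first by rewrite scale0r subr0 det1 oner_neq0.
have -> : 1%:M - l *: cmx Ah = l *: (l^-1%:M - cmx Ah).
  by rewrite scalerBr scale_scalar_mx mulfV.
rewrite detZ mulf_eq0 negb_or expf_neq0 //=.
apply/negP => /det_root H0.
have /andP[_] := HA _ H0.
rewrite normfV invf_lt1 ?normr_gt0 //.
by move/(lt_trans Hl); rewrite ltxx.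
Qed.

Lemma root_det (F : fieldType) n (A : 'M[F]_n) a :
  root (char_poly A) a -> \det (a%:M - A) == 0.
Proof.
rewrite -eigenvalue_root_char => /eigenvalueP [v vA v0]; apply/det0P.
by exists v => //; rewrite mulmxBr mul_mx_scalar vA subrr.
Qed.

Lemma root_tr (F : fieldType) n (A : 'M[F]_n) a :
  root (char_poly A^T) a -> root (char_poly A) a.
Proof.
move/root_det; rewrite -det_tr linearB /= tr_scalar_mx trmxK.
rewrite -eigenvalue_root_char => /det0P [v v0 vA]; apply/eigenvalueP.
by exists v => //; apply/eqP; rewrite eq_sym -subr_eq0 -mul_mx_scalar -mulmxBr vA.
Qed.

Lemma root0 (R : rcfType) r (Ah : 'M[R]_r) :
  \det Ah = 0 -> root (char_poly (cmx Ah)) 0.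
Proof.
move=> d0; rewrite -eigenvalue_root_char; apply/eigenvalueP.
have /det0P [v v0 vA] : \det (cmx Ah) == 0 by rewrite /cmx det_map_mx d0 rmorph0.
by exists v => //; rewrite vA scale0r.
Qed.
Theorem theorem2 (R : rcfType) (n m N r : nat)
  (A : 'M[R]_n) (B : 'M[R]_(n, m))
  (x1 x2 : 'I_N -> 'cV[R]_n) (u1 : 'I_N -> 'cV[R]_m)
  (Z2 : 'M[R]_(N, n)) (X1d : 'M[R]_(n, N))
  (Ah Ahd : 'M[R]_r) (Bh : 'M[R]_(r, m)) (Ch : 'M[R]_(n, r))
  (P Q : 'M[R]_r) (Rm S Rs Ss : 'M[R]_(n, r)) :
  (forall l : R[i], eigenvalue_c A l -> `|l| < 1) ->
  (n <= N)%N ->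
  (forall i, x2 i = A *m x1 i + B *m u1 i) ->
  let X1 : 'M[R]_(N, n) := \matrix_(i, j) x1 i j 0 in
  let X2 : 'M[R]_(N, n) := \matrix_(i, j) x2 i j 0 in
  let U1 : 'M[R]_(N, m) := \matrix_(i, j) u1 i j 0 in
  let ZB : 'M[R]_(m, N) := B^T *m X1^T in
  let UB : 'M[R]_(N, n) := U1 *m B^T in
  X2 *m X1^T = X1 *m Z2^T + U1 *m ZB ->
  is_pinv X1 X1d ->
  is_pinv Ah Ahd ->
  (* (a1)-(a4) *)
  regular_pencil (X1d *m Z2) (X1d *m X1) ->
  disjoint_spectra (X1d *m Z2) (X1d *m X1) (1%:M : 'M[R]_r) Ah ->
  regular_pencil (X1d *m (X2 - UB)) (X1d *m X1) ->
  disjoint_spectra (X1d *m (X2 - UB)) (X1d *m X1) (1%:M : 'M[R]_r) Ah ->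
  (* (A2) *)
  (forall l : R[i], eigenvalue_c Ah l -> 0 < `|l| < 1) ->
  (* (b2) *)
  \rank X1 = n ->
  Ah *m P *m Ah^T + Bh *m Bh^T = P ->
  Ah^T *m Q *m Ah + Ch^T *m Ch = Q ->
  X1d *m Z2 *m Rm *m Ah^T + X1d *m ZB^T *m Bh^T = X1d *m X1 *m Rm ->
  X1d *m (X2 - UB) *m S *m Ah - X1d *m X1 *m Ch = X1d *m X1 *m S ->
  A *m Rs *m Ah^T + B *m Bh^T = Rs ->
  A^T *m Ss *m Ah - Ch = Ss ->
  let SB : 'M[R]_(m, r) := B^T *m S in
  [/\ 2%:R *: (Q *m Ah *m P + (S^T *m Rm - SB^T *m Bh^T) *m Ahd^T)
        = 2%:R *: (Q *m Ah *m P + Ss^T *m A *m Rs),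
      2%:R *: (SB^T + Q *m Bh) = 2%:R *: (Ss^T *m B + Q *m Bh)
    & 2%:R *: (Ch *m P - Rm) = 2%:R *: (Ch *m P - Rs)].
Proof.
move=> HA _ Hx X1 X2 U1 ZB UB HZ [P1 P2 P3 P4] [Q1 Q2 Q3 Q4] _ _ _ _ HAh Hrk
  HP HQ HR HS HRs HSs SB.
have hX2 : X2 = X1 *m A^T + U1 *m B^T.
  apply/matrixP=> i j; rewrite /X2 /X1 /U1 !mxE Hx !mxE; congr (_ + _);
  by apply: eq_bigr => k _; rewrite !mxE mulrC.
have hfree : row_free X1^T by rewrite /row_free mxrank_tr Hrk.
have hI : X1d *m X1 = 1%:M.
  apply: trmx_inj; apply: (row_free_inj hfree).
  by rewrite /= -trmx_mul mulmxA P1 trmx1 mul1mx.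
have hZ2 : Z2 = X1 *m A.
  move: HZ; rewrite hX2 mulmxDl /ZB mulmxA => /addIr H.
  have : X1d *m (X1 *m A^T *m X1^T) = X1d *m (X1 *m Z2^T) by rewrite H.
  rewrite !mulmxA hI !mul1mx => H'.
  by rewrite -[Z2]trmxK -H' trmx_mul !trmxK.
have h1 : X1d *m Z2 = A by rewrite hZ2 mulmxA hI mul1mx.
have h2 : X1d *m ZB^T = B by rewrite /ZB trmx_mul !trmxK mulmxA hI mul1mx.
have h3 : X1d *m (X2 - UB) = A^T by rewrite /UB hX2 addrK mulmxA hI mul1mx.
rewrite h1 h2 hI mul1mx in HR.
rewrite h3 hI !mul1mx in HS.
have hDs : A^T *m (S - Ss) *m Ah = S - Ss.
  rewrite mulmxBr mulmxBl.
  have -> : A^T *m S *m Ah = S + Ch by apply/eqP; rewrite -subr_eq HS.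
  have -> : A^T *m Ss *m Ah = Ss + Ch by apply/eqP; rewrite -subr_eq HSs.
  by rewrite opprD addrACA subrr addr0.
have hDr : A *m (Rm - Rs) *m Ah^T = Rm - Rs.
  rewrite mulmxBr mulmxBl.
  have -> : A *m Rm *m Ah^T = Rm - B *m Bh^T by rewrite -[in RHS]HR addrK.
  have -> : A *m Rs *m Ah^T = Rs - B *m Bh^T by rewrite -[in RHS]HRs addrK.
  by rewrite opprB addrA subrK.
have eS : S = Ss.
  apply/eqP; rewrite -subr_eq0 -(map_mx_eq0 (real_complex R)); apply/eqP.
  apply: (@stein0 _ _ _ (cmx A^T) (cmx Ah)); last by rewrite /cmx -!map_mxM hDs.
  move=> l; rewrite /cmx -map_trmx => /root_tr Hl.
  by apply: detIZ => //; apply: HA.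
have eR : Rm = Rs.
  apply/eqP; rewrite -subr_eq0 -(map_mx_eq0 (real_complex R)); apply/eqP.
  apply: (@stein0 _ _ _ (cmx A) (cmx Ah^T)); last by rewrite /cmx -!map_mxM hDr.
  move=> l Hl; rewrite /cmx -map_trmx.
  have -> : 1%:M - l *: (map_mx (real_complex R) Ah)^T
      = (1%:M - l *: map_mx (real_complex R) Ah)^T.
    by apply/matrixP => i j; rewrite !mxE eq_sym.
  by rewrite det_tr; apply: detIZ => //; apply: HA.
have hdet : \det Ah != 0.
  apply/eqP => /root0 /HAh; by rewrite normr0 ltxx.
have hu : Ah \in unitmx by rewrite unitmxE unitfE.
have hAhd : Ahd *m Ah = 1%:M.
  have := congr1 (mulmx (invmx Ah)) Q1.
  by rewrite -!mulmxA mulKmx // mulVmx.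
rewrite /SB -eR -eS; split => //.
  congr (_ *: (_ + _)).
  have E : Rm - B *m Bh^T = A *m Rm *m Ah^T by rewrite -{1}HR addrK.
  rewrite trmx_mul trmxK -(mulmxA S^T B) -mulmxBr E.
  by rewrite -!mulmxA -trmx_mul hAhd trmx1 mulmx1.
by rewrite trmx_mul trmxK.
Qed.
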